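(* Let $X$ be a spectral space. Then $\mathcal X'(X)$ with the Zariski topology is a spectral space, and its inverse topology coincides with the lower Vietoris topology on $\mathcal X'(X)$.
   Context: $\mathcal X'(X)$ is the set of nonempty closed subsets of $X$. Its Zariski topology has as basis of open sets $\mathcal U'(\Omega):=\{Y\in\mathcal X'(X)\mid Y\cap\Omega=\emptyset\}$, $\Omega$ ranging over quasi-compact open subsets of $X$. For a spectral space $Y$, the inverse topology on $Y$ is the topology having the quasi-compact open subsets of $Y$ as a basis of closed sets. The lower Vietoris topology on $\mathcal X'(X)$ is the topology with subbasis of open sets $U^-:=\{C\in\mathcal X'(X)\mid C\cap U\neq\emptyset\}$, $U$ ranging over open subsets of $X$. *)

(* Defs.v *)
From Stdlib Require Import List.

Definition topology (X : Type) := (X -> Prop) -> Prop.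

Definition is_topology {X : Type} (O : topology X) : Prop :=
  O (fun _ => False) /\ O (fun _ => True) /\
  (forall U V, O U -> O V -> O (fun x => U x /\ V x)) /\
  (forall F : (X -> Prop) -> Prop, (forall U, F U -> O U) ->
     O (fun x => exists U, F U /\ U x)).

Definition generated {X : Type} (S : (X -> Prop) -> Prop) : topology X :=
  fun U => forall O : topology X, is_topology O -> (forall W, S W -> O W) -> O U.

Definition is_closed {X : Type} (O : topology X) (C : X -> Prop) : Prop :=
  O (fun x => ~ C x).

Definition quasi_compact {X : Type} (O : topology X) (K : X -> Prop) : Prop :=
  forall F : (X -> Prop) -> Prop, (forall U, F U -> O U) ->
  (forall x, K x -> exists U, F U /\ U x) ->
  exists l : list (X -> Prop), (forall U, In U l -> F U) /\
     (forall x, K x -> exists U, In U l /\ U x).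

Definition qc_open {X : Type} (O : topology X) (U : X -> Prop) : Prop :=
  O U /\ quasi_compact O U.

Definition T0 {X : Type} (O : topology X) : Prop :=
  forall x y, (forall U, O U -> (U x <-> U y)) -> x = y.

Definition closure_pt {X : Type} (O : topology X) (x : X) : X -> Prop :=
  fun y => forall D, is_closed O D -> D x -> D y.

Definition irreducible_closed {X : Type} (O : topology X) (C : X -> Prop) : Prop :=
  is_closed O C /\ (exists x, C x) /\
  (forall C1 C2, is_closed O C1 -> is_closed O C2 ->
     (forall x, C x -> C1 x \/ C2 x) ->
     (forall x, C x -> C1 x) \/ (forall x, C x -> C2 x)).

Definition sober {X : Type} (O : topology X) : Prop :=
  forall C, irreducible_closed O C ->
    exists x, (forall y, closure_pt O x y <-> C y) /\
      (forall x', (forall y, closure_pt O x' y <-> C y) -> x' = x).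

Definition spectral {X : Type} (O : topology X) : Prop :=
  is_topology O /\ T0 O /\ quasi_compact O (fun _ => True) /\
  (forall U V, qc_open O U -> qc_open O V -> qc_open O (fun x => U x /\ V x)) /\
  (forall U, O U -> forall x, U x -> exists V, qc_open O V /\ V x /\ (forall y, V y -> U y)) /\
  sober O.

Definition inverse_topology {Y : Type} (O : topology Y) : topology Y :=
  generated (fun W => exists V, qc_open O V /\ (forall y, W y <-> ~ V y)).

Record nclosed {X : Type} (O : topology X) := NClosed {
  ncset : X -> Prop;
  nc_closed : is_closed O ncset;
  nc_nonempty : exists x, ncset x }.

Definition zariski {X : Type} (O : topology X) : topology (nclosed O) :=
  generated (fun W => exists Om, qc_open O Om /\
     (forall Y : nclosed O, W Y <-> (forall x, ncset O Y x -> ~ Om x))).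

Definition lower_vietoris {X : Type} (O : topology X) : topology (nclosed O) :=
  generated (fun W => exists U, O U /\
     (forall C : nclosed O, W C <-> exists x, ncset O C x /\ U x)).

(* Main.v *)
Require Import Defs.
From Stdlib Require Import List Classical FunctionalExtensionality PropExtensionality ProofIrrelevance.

Lemma pext {A : Type} (P Q : A -> Prop) : (forall x, P x <-> Q x) -> P = Q.
Proof. intros H; apply functional_extensionality; intros; apply propositional_extensionality; auto. Qed.

Lemma gen_top {X : Type} (S : (X -> Prop) -> Prop) : is_topology (generated S).
Proof.
  unfold is_topology, generated; split; [|split; [|split]].
  - intros O HO _; destruct HO as [h1 [h2 [h3 h4]]]; assumption.
  - intros O HO _; destruct HO as [h1 [h2 [h3 h4]]]; assumption.
  - intros U V HU HV O HO HS; pose proof HO as HO'; destruct HO' as [h1 [h2 [h3 h4]]]; apply h3; [exact (HU O HO HS) | exact (HV O HO HS)].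
  - intros F HF O HO HS; pose proof HO as HO'; destruct HO' as [h1 [h2 [h3 h4]]]; apply h4; intros U HU; exact (HF U HU O HO HS).
Qed.

Lemma top_inter {X : Type} (O : topology X) U V : is_topology O -> O U -> O V -> O (fun x => U x /\ V x).
Proof. intros [_ [_ [h _]]]; apply h. Qed.

Lemma top_union {X : Type} (O : topology X) F : is_topology O -> (forall U, F U -> O U) ->
  O (fun x => exists U, F U /\ U x).
Proof. intros [_ [_ [_ h]]]; apply h. Qed.

Lemma top_empty {X : Type} (O : topology X) : is_topology O -> O (fun _ => False).
Proof. intros [h _]; apply h. Qed.

Lemma gen_sub {X : Type} (S : (X -> Prop) -> Prop) W : S W -> generated S W.
Proof. intros H O _ HS; auto. Qed.

Lemma gen_mono {X : Type} (S1 S2 : (X -> Prop) -> Prop) W :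
  (forall W', S1 W' -> generated S2 W') -> generated S1 W -> generated S2 W.
Proof. intros H HW O HO HS; apply HW; auto; intros W' h; apply (H W' h O HO HS). Qed.

Lemma closed_compl {X : Type} (O : topology X) U : O U -> is_closed O (fun y => ~ U y).
Proof.
  intros H; unfold is_closed.
  assert (E : (fun y => ~ ~ U y) = U) by (apply pext; intros; split; [apply NNPP | auto]).
  rewrite E; auto.
Qed.

Lemma qc_empty {X : Type} (O : topology X) : is_topology O -> qc_open O (fun _ => False).
Proof.
  intros H; split; [apply H|]. intros F _ _; exists nil; split; [intros U []| intros x []].
Qed.

Lemma qc_union2 {X : Type} (O : topology X) A B : is_topology O -> qc_open O A -> qc_open O B ->
  qc_open O (fun x => A x \/ B x).
Proof.
  intros HO [oA cA] [oB cB]; split.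
  - assert (E : (fun x => A x \/ B x) = (fun x => exists U, (U = A \/ U = B) /\ U x)).
    { apply pext; intros x; split.
      - intros [h|h]; [exists A | exists B]; auto.
      - intros [U [[e|e] h]]; subst; auto. }
    rewrite E; apply HO; intros U [e|e]; subst; auto.
  - intros F HF Hcov.
    destruct (cA F HF (fun x ax => Hcov x (or_introl ax))) as [l1 [H1 H2]].
    destruct (cB F HF (fun x bx => Hcov x (or_intror bx))) as [l2 [H3 H4]].
    exists (l1 ++ l2); split.
    + intros U hU; apply in_app_iff in hU; destruct hU; auto.
    + intros x [h|h]; [destruct (H2 x h) as [U [i u]] | destruct (H4 x h) as [U [i u]]];
        exists U; split; auto; apply in_app_iff; auto.
Qed.

Definition basic {X : Type} (O : topology X) (Om : X -> Prop) : nclosed O -> Prop :=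
  fun Y => forall x, ncset O Y x -> ~ Om x.

Lemma Z_basis {X : Type} (O : topology X) W : is_topology O -> zariski O W ->
  forall Y, W Y -> exists Om, qc_open O Om /\ basic O Om Y /\ (forall Y', basic O Om Y' -> W Y').
Proof.
  intros HO H.
  apply (H (fun W => forall Y, W Y -> exists Om, qc_open O Om /\ basic O Om Y /\ (forall Y', basic O Om Y' -> W Y'))).
  - split; [|split; [|split]].
    + intros Y [].
    + intros Y _; exists (fun _ => False); split; [apply qc_empty; auto|]; split;
        [intros x _ h; exact h | auto].
    + intros U V HU HV Y [hu hv].
      destruct (HU Y hu) as [O1 [q1 [b1 s1]]]; destruct (HV Y hv) as [O2 [q2 [b2 s2]]].
      exists (fun x => O1 x \/ O2 x); split; [apply qc_union2; auto|]; split.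
      * intros x hx [h|h]; [apply (b1 x hx h) | apply (b2 x hx h)].
      * intros Y' hb; split; [apply s1 | apply s2]; intros x hx h; apply (hb x hx); auto.
    + intros F HF Y [U [FU UY]]; destruct (HF U FU Y UY) as [Om [q [b s]]].
      exists Om; split; auto; split; auto; intros Y' h; exists U; split; auto.
  - intros W' [Om [q HW]] Y hY; exists Om; split; auto; split;
      [exact (proj1 (HW Y) hY) | intros Y' h; exact (proj2 (HW Y') h)].
Qed.

Lemma Z_basic_open {X : Type} (O : topology X) Om : qc_open O Om -> zariski O (basic O Om).
Proof. intros q; apply gen_sub; exists Om; split; auto; intros; tauto. Qed.

Lemma Z_down {X : Type} (O : topology X) W (Y1 Y2 : nclosed O) : is_topology O -> zariski O W -> W Y2 ->
  (forall x, ncset O Y1 x -> ncset O Y2 x) -> W Y1.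
Proof.
  intros HO HW h2 sub. destruct (Z_basis O W HO HW Y2 h2) as [Om [q [b s]]].
  apply s; intros x hx; apply b; auto.
Qed.

Lemma Z_basic_qc {X : Type} (O : topology X) Om : is_topology O -> qc_open O Om ->
  quasi_compact (zariski O) (basic O Om).
Proof.
  intros HO q F HF Hcov. destruct (classic (exists x, ~ Om x)) as [[x0 hx0] | hn].
  - assert (hcl : is_closed O (fun x => ~ Om x)).
    { apply closed_compl; apply q. }
    pose (Yt := NClosed X O (fun x => ~ Om x) hcl (ex_intro _ x0 hx0)).
    assert (bt : basic O Om Yt) by (intros x hx; exact hx).
    destruct (Hcov Yt bt) as [U [FU UYt]].
    destruct (Z_basis O U HO (HF U FU) Yt UYt) as [Om' [q' [b' s']]].
    exists (U :: nil); split.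
    + intros U0 [e|[]]; subst; auto.
    + intros Y hY; exists U; split; [left; auto|]. apply s'.
      intros x hx h'. apply (b' x); [simpl; intros h; apply (hY x hx h) | exact h'].
  - exists nil; split; [intros U []|]. intros Y hY; destruct (nc_nonempty O Y) as [x hx].
    exfalso; apply (hY x hx); apply NNPP; intros h; apply hn; exists x; auto.
Qed.

Lemma qc_ext {X : Type} (O : topology X) K K' : (forall y, K y <-> K' y) -> quasi_compact O K -> quasi_compact O K'.
Proof.
  intros E H F HF Hcov. destruct (H F HF) as [l [h1 h2]].
  - intros x hx; apply Hcov, E; auto.
  - exists l; split; auto; intros x hx; apply h2, E; auto.
Qed.

Lemma qc_of_list {X : Type} (O : topology X) (L : list (X -> Prop)) K :
  (forall A, In A L -> quasi_compact O A /\ (forall y, A y -> K y)) ->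
  (forall y, K y -> exists A, In A L /\ A y) -> quasi_compact O K.
Proof.
  intros HL HK F HF Hcov.
  assert (aux : forall L', (forall A, In A L' -> quasi_compact O A /\ (forall y, A y -> K y)) ->
    exists l, (forall U, In U l -> F U) /\
      (forall y, (exists A, In A L' /\ A y) -> exists U, In U l /\ U y)).
  { induction L' as [|a L' IH]; intros H.
    - exists nil; split; [intros U []|]; intros y [A [[] _]].
    - destruct (H a (or_introl eq_refl)) as [qa sa].
      destruct (qa F HF) as [l1 [h1 h2]]; [intros y hy; apply Hcov, sa; auto|].
      destruct IH as [l2 [h3 h4]]; [intros A hA; apply H; right; auto|].
      exists (l1 ++ l2); split.
      + intros U hU; apply in_app_iff in hU; destruct hU; auto.
      + intros y [A [[e|i] hy]].
        * subst; destruct (h2 y hy) as [U [i u]]; exists U; split; auto; apply in_app_iff; auto.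
        * destruct (h4 y (ex_intro _ A (conj i hy))) as [U [i' u]]; exists U; split; auto;
            apply in_app_iff; auto. }
  destruct (aux L HL) as [l [h1 h2]]; exists l; split; auto.
Qed.

Definition zsub {X : Type} (O : topology X) (B : nclosed O -> Prop) : Prop :=
  exists Om, qc_open O Om /\ forall Y, B Y <-> basic O Om Y.

Lemma Zqc_list {X : Type} (O : topology X) U : is_topology O -> qc_open (zariski O) U ->
  exists l, (forall B, In B l -> zsub O B /\ forall Y, B Y -> U Y) /\
    (forall Y, U Y -> exists B, In B l /\ B Y).
Proof.
  intros HO [oU cU].
  apply (cU (fun B => zsub O B /\ forall Y, B Y -> U Y)).
  - intros B [[Om [q e]] _]; apply gen_sub; exists Om; auto.
  - intros Y hY; destruct (Z_basis O U HO oU Y hY) as [Om [q [b s]]].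
    exists (basic O Om); split; [split; [exists Om; split; auto; tauto | auto] | auto].
Qed.

Lemma Zqc_inter {X : Type} (O : topology X) U V : is_topology O -> qc_open (zariski O) U ->
  qc_open (zariski O) V -> qc_open (zariski O) (fun Y => U Y /\ V Y).
Proof.
  intros HO hU hV. split; [apply (top_inter (zariski O)); [apply gen_top | apply hU | apply hV]|].
  destruct (Zqc_list O U HO hU) as [l1 [a1 c1]].
  destruct (Zqc_list O V HO hV) as [l2 [a2 c2]].
  apply (qc_of_list _ (flat_map (fun B1 => map (fun B2 => fun Y => B1 Y /\ B2 Y) l2) l1)).
  - intros A hA. apply in_flat_map in hA; destruct hA as [B1 [i1 hA]].
    apply in_map_iff in hA; destruct hA as [B2 [e i2]]; subst.
    destruct (a1 B1 i1) as [[O1 [q1 e1]] s1]; destruct (a2 B2 i2) as [[O2 [q2 e2]] s2].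
    split.
    + apply (qc_ext _ (basic O (fun x => O1 x \/ O2 x))).
      * intros Y; split.
        -- intros h; split; [apply e1 | apply e2]; intros x hx o; apply (h x hx); auto.
        -- intros [h1 h2] x hx [o|o]; [apply e1 in h1; apply (h1 x hx o) | apply e2 in h2; apply (h2 x hx o)].
      * apply Z_basic_qc; auto; apply qc_union2; auto.
    + intros Y [h1 h2]; split; auto.
  - intros Y [hu hv]. destruct (c1 Y hu) as [B1 [i1 b1]]; destruct (c2 Y hv) as [B2 [i2 b2]].
    exists (fun Y => B1 Y /\ B2 Y); split; auto.
    apply in_flat_map; exists B1; split; auto; apply in_map_iff; exists B2; auto.
Qed.

Lemma closure_T0 {X : Type} (O : topology X) x y : is_topology O -> T0 O ->
  closure_pt O x y -> closure_pt O y x -> x = y.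
Proof.
  intros HO HT hxy hyx. apply HT; intros U hU; split; intros h; apply NNPP; intros hn.
  - apply (hyx (fun z => ~ U z) (closed_compl O U hU) hn h).
  - apply (hxy (fun z => ~ U z) (closed_compl O U hU) hn h).
Qed.

Lemma generic_unique {X : Type} (O : topology X) (C : X -> Prop) x x' : is_topology O -> T0 O ->
  (forall y, closure_pt O x y <-> C y) -> (forall y, closure_pt O x' y <-> C y) -> x' = x.
Proof.
  intros HO HT Hx Hx'. apply (closure_T0 O); auto.
  - apply (proj2 (Hx' x)), (proj1 (Hx x)); intros D _ h; auto.
  - apply (proj2 (Hx x')), (proj1 (Hx' x')); intros D _ h; auto.
Qed.

Lemma nc_eq {X : Type} (O : topology X) (Y1 Y2 : nclosed O) :
  (forall x, ncset O Y1 x <-> ncset O Y2 x) -> Y1 = Y2.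
Proof.
  destruct Y1 as [s1 c1 n1], Y2 as [s2 c2 n2]; simpl; intros H.
  assert (s1 = s2) by (apply pext; auto); subst.
  f_equal; apply proof_irrelevance.
Qed.

Lemma sep {X : Type} (O : topology X) (Y : nclosed O) x : spectral O -> ~ ncset O Y x ->
  exists V, qc_open O V /\ V x /\ basic O V Y.
Proof.
  intros [HO [_ [_ [_ [Hbas _]]]]] hn.
  destruct (Hbas _ (nc_closed O Y) x hn) as [V [q [vx s]]].
  exists V; split; auto; split; auto; intros z hz hv; apply (s z hv hz).
Qed.

Lemma Z_T0 {X : Type} (O : topology X) : spectral O -> T0 (zariski O).
Proof.
  intros HS Y1 Y2 H; apply nc_eq; intros x; split; intros hx; apply NNPP; intros hn.
  - destruct (sep O Y2 x HS hn) as [V [q [vx b]]].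
    apply (H _ (Z_basic_open O V q)) in b. apply (b x hx vx).
  - destruct (sep O Y1 x HS hn) as [V [q [vx b]]].
    apply (H _ (Z_basic_open O V q)) in b. apply (b x hx vx).
Qed.

Lemma irr_meet {X : Type} (O : topology X) C U V : irreducible_closed (zariski O) C ->
  zariski O U -> zariski O V -> (exists Y, C Y /\ U Y) -> (exists Y, C Y /\ V Y) ->
  exists Y, C Y /\ U Y /\ V Y.
Proof.
  intros [_ [_ H]] hU hV [Y1 [c1 u1]] [Y2 [c2 v2]]. apply NNPP; intros hn.
  destruct (H (fun Y => ~ U Y) (fun Y => ~ V Y)) as [h|h].
  - apply closed_compl; auto.
  - apply closed_compl; auto.
  - intros Y hY; apply NNPP; intros h2; apply hn; exists Y; split; auto; split;
      apply NNPP; intros h3; apply h2; auto.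
  - apply (h Y1 c1 u1).
  - apply (h Y2 c2 v2).
Qed.

Lemma Z_sober {X : Type} (O : topology X) : spectral O -> sober (zariski O).
Proof.
  intros HS C Hirr. pose proof HS as [HO [HT0 [Hcpt [Hint [Hbas Hsob]]]]].
  pose (I0 := fun Om => qc_open O Om /\ exists Y, C Y /\ basic O Om Y).
  assert (I0_empty : I0 (fun _ => False)).
  { split; [apply qc_empty; auto|]. destruct Hirr as [_ [[Y hY] _]]; exists Y; split; auto.
    intros x _ h; exact h. }
  assert (I0_union : forall A B, I0 A -> I0 B -> I0 (fun x => A x \/ B x)).
  { intros A B [qa [Ya [ca ba]]] [qb [Yb [cb bb]]]. split; [apply qc_union2; auto|].
    destruct (irr_meet O C _ _ Hirr (Z_basic_open O A qa) (Z_basic_open O B qb)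
      (ex_intro _ Ya (conj ca ba)) (ex_intro _ Yb (conj cb bb))) as [Y [cy [ha hb]]].
    exists Y; split; auto; intros x hx [h|h]; [apply (ha x hx h) | apply (hb x hx h)]. }
  assert (I0_list : forall l, (forall A, In A l -> I0 A) -> I0 (fun x => exists A, In A l /\ A x)).
  { induction l as [|a l IH]; intros H.
    - assert (E : (fun x => exists A, In A nil /\ A x) = (fun _ : X => False)).
      { apply pext; intros x; split; [intros [A [[] _]] | intros []]. }
      rewrite E; auto.
    - assert (E : (fun x => exists A, In A (a :: l) /\ A x) =
                  (fun x => a x \/ (fun x => exists A, In A l /\ A x) x)).
      { apply pext; intros x; split.
        - intros [A [[e|i] h]]; [subst; left; auto | right; exists A; auto].
        - intros [h | [A [i h]]]; [exists a; split; [left|]; auto | exists A; split; [right|]; auto]. }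
      rewrite E; apply I0_union; [apply H; left; auto | apply IH; intros A hA; apply H; right; auto]. }
  pose (Y0s := fun x => forall Om, I0 Om -> ~ Om x).
  assert (hcl : is_closed O Y0s).
  { unfold is_closed.
    assert (E : (fun x => ~ Y0s x) = (fun x => exists U, I0 U /\ U x)).
    { apply pext; intros x; split.
      - intros h; apply NNPP; intros h2; apply h; intros Om hI hOm; apply h2; exists Om; auto.
      - intros [U [hI hU]] h; apply (h U hI hU). }
    rewrite E; apply top_union; auto; intros U [[oU _] _]; auto. }
  assert (hne : exists x, Y0s x).
  { apply NNPP; intros hne.
    destruct (Hcpt I0) as [l [h1 h2]].
    - intros U [[o _] _]; auto.
    - intros x _; apply NNPP; intros h; apply hne; exists x; intros Om hI hOm; apply h; exists Om; auto.
    - destruct (I0_list l h1) as [_ [Y [cY bY]]]. destruct (nc_nonempty O Y) as [x hx].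
      destruct (h2 x I) as [A [inA Ax]]. apply (bY x hx); exists A; auto. }
  pose (Y0 := NClosed X O Y0s hcl hne).
  destruct Hirr as [hCcl [hCne hCirr]].
  assert (Y0C : C Y0).
  { apply NNPP; intros hnc.
    destruct (Z_basis O _ HO hCcl Y0 hnc) as [Om [q [b s]]].
    destruct q as [oOm cOm] eqn:Eq.
    destruct (cOm I0) as [l [h1 h2]].
    - intros U [[o _] _]; auto.
    - intros x hx; apply NNPP; intros h; apply (b x); [|auto].
      simpl; intros Om' hI h'; apply h; exists Om'; auto.
    - destruct (I0_list l h1) as [_ [Y [cY bY]]].
      apply (s Y); [ | auto].
      intros x hx hOm; destruct (h2 x hOm) as [A [inA Ax]]; apply (bY x hx); exists A; auto. }
  exists Y0; split.
  - intros Y; split.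
    + intros hcl'; apply hcl'; [exact hCcl | exact Y0C].
    + intros hCY D hD hDY0.
      assert (sub : forall x, Y0s x -> ncset O Y x).
      { intros x hx; apply NNPP; intros hn.
        destruct (sep O Y x HS hn) as [V [qV [vx bV]]].
        apply (hx V); auto. split; auto. exists Y; auto. }
      apply NNPP; intros hnD.
      apply (Z_down O (fun Y => ~ D Y) Y0 Y HO hD hnD sub); auto.
  - intros x' Hx'. eapply (generic_unique (zariski O) C); [apply gen_top | apply Z_T0; auto | | exact Hx'].
    intros Y; split.
    + intros hcl'; apply hcl'; [exact hCcl | exact Y0C].
    + intros hCY D hD hDY0.
      assert (sub : forall x, Y0s x -> ncset O Y x).
      { intros x hx; apply NNPP; intros hn.
        destruct (sep O Y x HS hn) as [V [qV [vx bV]]].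
        apply (hx V); auto. split; auto. exists Y; auto. }
      apply NNPP; intros hnD.
      apply (Z_down O (fun Y => ~ D Y) Y0 Y HO hD hnD sub); auto.
Qed.

Lemma Z_spectral {X : Type} (O : topology X) : spectral O -> spectral (zariski O).
Proof.
  intros HS. pose proof HS as [HO [HT0 [Hcpt [Hint [Hbas Hsob]]]]].
  split; [apply gen_top|]. split; [apply Z_T0; auto|]. split; [|split; [|split]].
  - intros F HF Hcov. destruct (classic (exists x : X, True)) as [[x0 _] | hn].
    + assert (hcl : is_closed O (fun _ : X => True)).
      { unfold is_closed.
        assert (E : (fun _ : X => ~ True) = (fun _ : X => False)) by (apply pext; tauto).
        rewrite E; apply top_empty; auto. }
      pose (Yf := NClosed X O (fun _ => True) hcl (ex_intro _ x0 I)).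
      destruct (Hcov Yf I) as [U [FU UYf]].
      exists (U :: nil); split; [intros U0 [e|[]]; subst; auto|].
      intros Y _; exists U; split; [left; auto|].
      apply (Z_down O U Y Yf HO (HF U FU) UYf); intros; simpl; auto.
    + exists nil; split; [intros U []|]. intros Y _; destruct (nc_nonempty O Y) as [x _].
      exfalso; apply hn; exists x; auto.
  - intros U V hU hV; apply Zqc_inter; auto.
  - intros U hU Y hY. destruct (Z_basis O U HO hU Y hY) as [Om [q [b s]]].
    exists (basic O Om); split; [split; [apply Z_basic_open; auto | apply Z_basic_qc; auto] | split; auto].
  - apply Z_sober; auto.
Qed.

Lemma LV_inter_list {X : Type} (O : topology X) (l : list (nclosed O -> Prop)) :
  (forall B, In B l -> zsub O B) -> lower_vietoris O (fun Y => forall B, In B l -> ~ B Y).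
Proof.
  induction l as [|a l IH]; intros H.
  - assert (E : (fun Y : nclosed O => forall B, In B nil -> ~ B Y) = (fun _ => True)).
    { apply pext; intros Y; split; auto; intros _ B []. }
    rewrite E. destruct (gen_top (fun W => exists U, O U /\
     (forall C : nclosed O, W C <-> exists x, ncset O C x /\ U x))) as [_ [h _]]; exact h.
  - assert (E : (fun Y : nclosed O => forall B, In B (a :: l) -> ~ B Y) =
       (fun Y => (fun Y => ~ a Y) Y /\ (fun Y => forall B, In B l -> ~ B Y) Y)).
    { apply pext; intros Y; split.
      - intros h; split; [apply h; left; auto | intros B i; apply h; right; auto].
      - intros [h1 h2] B [e|i]; [subst; auto | auto]. }
    rewrite E. apply top_inter; [apply gen_top | | apply IH; intros B i; apply H; right; auto].
    destruct (H a (or_introl eq_refl)) as [Om [q e]].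
    apply gen_sub. exists Om; split; [apply q|]. intros Y; split.
    + intros h; apply NNPP; intros h2; apply h, e; intros x hx ho; apply h2; exists x; auto.
    + intros [x [hx ho]] h; apply e in h; apply (h x hx ho).
Qed.

Theorem proposition4p3 (X : Type) (O : topology X) :
  spectral O ->
  spectral (zariski O) /\
  (forall W, inverse_topology (zariski O) W <-> lower_vietoris O W).
Proof.
  intros HS. pose proof HS as [HO [HT0 [Hcpt [Hint [Hbas Hsob]]]]].
  split; [apply Z_spectral; auto|]. intros W; split; apply gen_mono.
  - intros W' [V [qV e]].
    destruct (Zqc_list O V HO qV) as [l [a c]].
    assert (E : W' = (fun Y => forall B, In B l -> ~ B Y)).
    { apply pext; intros Y; split.
      - intros h B i hB; apply e in h; apply h; apply (a B i); auto.
      - intros h; apply e; intros hv; destruct (c Y hv) as [B [i hB]]; apply (h B i hB). }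
    rewrite E; apply LV_inter_list; intros B i; apply (a B i).
  - intros W' [U [oU e]].
    assert (E : W' = (fun Y => exists W'', (exists Om, qc_open O Om /\ (forall x, Om x -> U x) /\
                 (forall Y, W'' Y <-> exists x, ncset O Y x /\ Om x)) /\ W'' Y)).
    { apply pext; intros Y; split.
      - intros h; apply e in h; destruct h as [x [hx ux]].
        destruct (Hbas U oU x ux) as [Om [q [ox s]]].
        exists (fun Y => exists x, ncset O Y x /\ Om x); split; [exists Om; split; auto; split; auto; tauto|].
        exists x; auto.
      - intros [W'' [[Om [q [s e2]]] hW]]; apply e; apply e2 in hW; destruct hW as [x [hx ox]].
        exists x; auto. }
    rewrite E; apply top_union; [apply gen_top|].
    intros W'' [Om [q [s e2]]]. apply gen_sub. exists (basic O Om).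
    split; [split; [apply Z_basic_open; auto | apply Z_basic_qc; auto]|].
    intros Y; split.
    + intros h hb; apply e2 in h; destruct h as [x [hx ox]]; apply (hb x hx ox).
    + intros h; apply e2; apply NNPP; intros h2; apply h; intros x hx ox; apply h2; exists x; auto.
Qed.
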